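(* For every integer $n\ge0$, $$\sum_{k=0}^{2n}\frac{(-1)^k}{\binom{2n}{k}^2}=(2n+1)\frac{(-1)^n}{\binom{2n}{n}}\left(\frac34\sum_{k=1}^n\frac{(-1)^k\binom{2k}{k}}{k}+\sum_{k=0}^n\frac{(-1)^k\binom{2k}{k}}{2k+1}\right).$$ *)

(* Defs.v *)
From mathcomp Require Import all_boot all_order all_algebra.

(* Main.v *)
Require Import Defs.
From mathcomp Require Import all_boot all_order all_algebra.
From mathcomp Require Import ring lra zify.
Import GRing.Theory Num.Theory.
Local Open Scope ring_scope.

Definition qq (M j : rat) := M*(M-1)^+2*(-(M*(5*M+3))/2 + (3*M+1)*j - j^+2).
Definition GG (p j : nat) : rat :=
  (-1)^+j * qq (p.+2)%:R j%:R / ((p.+2)%:R^+2 * ('C(p.+1,j)%:R)^+2).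

Lemma term (p k : nat) : (k <= p)%N ->
  2*(p.+2)%:R*((p.+2)%:R-1)^+2 * ((-1)^+k / ('C(p.+2,k)%:R)^+2)
  + (p.+2)%:R^+2*((p.+2)%:R+1)/2 * ((-1)^+k / ('C(p,k)%:R)^+2) = GG p k.+1 - GG p k.
Proof.
move=> hk.
have hb : ('C(p,k)%:R : rat) != 0 by rewrite pnatr_eq0 -lt0n bin_gt0.
have hkr : (k%:R : rat) <= p%:R by rewrite ler_nat.
have hk0 : (0:rat) <= k%:R by rewrite ler0n.
have h1 := congr1 (fun x => x%:R : rat) (mul_bin_down p.+1 k).
have h2 := congr1 (fun x => x%:R : rat) (mul_bin_diag p.+1 k).
have h3 := congr1 (fun x => x%:R : rat) (mul_bin_down p.+2 k).
move: h1 h2 h3; rewrite /= !natrM !natrB ?(leqW hk) ?(leqW (leqW hk)) // => h1 h2 h3.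
have e1 : ('C(p.+1,k)%:R : rat) = (p.+1)%:R*'C(p,k)%:R/((p.+1)%:R-k%:R).
  rewrite h1; field; apply/eqP; lra.
have e2 : ('C(p.+1,k.+1)%:R : rat) = (p.+1)%:R*'C(p,k)%:R/(k.+1)%:R.
  rewrite h2; field; apply/eqP; lra.
have e3 : ('C(p.+2,k)%:R : rat) = (p.+2)%:R*'C(p.+1,k)%:R/((p.+2)%:R-k%:R).
  rewrite h3; field; apply/eqP; lra.
rewrite /GG /qq e3 e2 e1 [(-1)^+k.+1]exprS.
set s := (-1)^+k.
field.
by rewrite hb /=; apply/and5P; split; apply/eqP; lra.
Qed.

Lemma recur (p : nat) :
  \sum_(0 <= k < p.+3) (-1 : rat)^+k / ('C(p.+2,k)%:R)^+2 =
  ((-1)^+p.+1 * qq (p.+2)%:R (p.+1)%:R / (p.+2)%:R^+2 - qq (p.+2)%:R 0 / (p.+2)%:R^+2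
   + 2*(p.+2)%:R*((p.+2)%:R-1)^+2 * ((-1)^+p.+1/(p.+2)%:R^+2 + (-1)^+p.+2)
   - (p.+2)%:R^+2*((p.+2)%:R+1)/2 * \sum_(0 <= k < p.+1) (-1)^+k / ('C(p,k)%:R)^+2)
  / (2*(p.+2)%:R*((p.+2)%:R-1)^+2).
Proof.
set c1 := 2*(p.+2)%:R*((p.+2)%:R-1)^+2 : rat.
set c2 := (p.+2)%:R^+2*((p.+2)%:R+1)/2 : rat.
have c1nz : c1 != 0.
  rewrite /c1; have hp : (0:rat) <= p%:R by rewrite ler0n.
  by rewrite /c1 !mulf_neq0 ?expf_neq0 //; apply/eqP; lra.
rewrite (big_nat_recr p.+2) // (big_nat_recr p.+1) //= binSn binn.
set X := \sum_(0 <= i < p.+1) (-1)^+i / ('C(p.+2,i)%:R)^+2.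
set Y := \sum_(0 <= i < p.+1) (-1)^+i / ('C(p,i)%:R)^+2.
have tel : c1 * X + c2 * Y = GG p p.+1 - GG p 0.
  rewrite /X /Y !mulr_sumr -big_split /=.
  apply: telescope_sumr_eq => // k /andP[_ hk].
  by rewrite term.
move: tel; rewrite /GG binn bin0 => tel.
have hX : X = ((c1*X + c2*Y) - c2*Y)/c1 by field.
rewrite hX tel; field.
have hp : (0:rat) <= p%:R by rewrite ler0n.
by rewrite c1nz /=; apply/eqP; lra.
Qed.

Theorem mainTheorem10 (n : nat) :
  \sum_(0 <= k < (2 * n).+1) (-1 : rat) ^+ k / ('C(2 * n, k)%:R) ^+ 2 =
  (2 * n + 1)%:R * ((-1) ^+ n / 'C(2 * n, n)%:R) *
  ((3 / 4) * \sum_(1 <= k < n.+1) (-1) ^+ k * 'C(2 * k, k)%:R / k%:R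
   + \sum_(0 <= k < n.+1) (-1) ^+ k * 'C(2 * k, k)%:R / (2 * k + 1)%:R).
Proof.
elim: n => [|n IH].
  by rewrite !big_nat1 big_geq //=.
have e : (2 * n.+1 = (2*n).+2)%N by lia.
rewrite e (recur (2*n)) IH (big_nat_recr n.+1) // (big_nat_recr n.+1) //= e.
have hc : ('C(2*n,n)%:R : rat) != 0 by rewrite pnatr_eq0 -lt0n bin_gt0; lia.
have h1 := congr1 (fun x => x%:R : rat) (mul_bin_down (2*n).+1 n).
have h2 := congr1 (fun x => x%:R : rat) (mul_bin_diag (2*n).+2 n).
have hn : (0:rat) <= n%:R by rewrite ler0n.
move: h1 h2; rewrite /= !natrM !natrB //; last by lia.
move=> h1 h2.
have ec1 : ('C((2*n).+1,n)%:R : rat) = ((2*n).+1)%:R * 'C(2*n,n)%:R / (((2*n).+1)%:R - n%:R).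
  rewrite h1; field; apply/eqP; lra.
have ec2 : ('C((2*n).+2,n.+1)%:R : rat) = ((2*n).+2)%:R * 'C((2*n).+1,n)%:R / (n.+1)%:R.
  rewrite h2; field; apply/eqP; lra.
rewrite ec2 ec1.
have s1 : (-1 : rat)^+n.+1 = - (-1)^+n by rewrite exprS mulN1r.
have s2 : (-1 : rat)^+(2*n) = 1 by rewrite exprM expr2 mulN1r opprK expr1n.
have s3 : (-1:rat)^+(2*n).+1 = -1 by rewrite exprS s2 mulr1.
have s4 : (-1:rat)^+(2*n).+2 = 1 by rewrite exprS s3 mulrN1 opprK.
rewrite s1 s3 s4 /qq -[(-1 : rat)^+n]signr_odd.
case: (odd n) => /=; field;
  by rewrite hc /=; apply/and4P; split; apply/eqP; lra.
Qed.
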